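(* Let $\mathbf 1=(1,1,1,1)^t\in\mathbb C^4$, $A=\mathbf 1\mathbf 1^*-I$ (the $4\times4$ matrix with $0$ on the diagonal and $1$ off the diagonal), and $t\in\mathbb R$. Then \[\|A+tI\|_m=\begin{cases}|t|&\text{if } t\ge1\text{ or } t\le-3,\\ \tfrac12|3-t|&\text{if } -3\le t\le1.\end{cases}\] In particular $\|A\|_m=\tfrac32$, $\|I\|_m=1$, and $\|A-I\|_m=2>(\|A\|_m^2+\|I\|_m^2)^{1/2}$.
   Context: For a $4\times4$ matrix $B=[b_{ij}]$, $\|B\|_m$ is the norm of the Schur multiplier $R=[r_{ij}]\mapsto[b_{ij}r_{ij}]$ on $4\times4$ complex matrices with the operator norm. *)

(* Defs.v *)
From HB Require Import structures.
From mathcomp Require Import all_boot all_order all_algebra.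
From mathcomp Require Import all_classical all_reals.
From mathcomp.real_closed Require Import complex.
Set Implicit Arguments. Unset Strict Implicit. Unset Printing Implicit Defensive.
Import Order.TTheory GRing.Theory Num.Theory.
Local Open Scope ring_scope.
Local Open Scope classical_set_scope.

Section Defs.
Variable R : realType.

Definition vnorm (x : 'cV[R[i]]_4) : R :=
  Num.sqrt (\sum_(k < 4) (Normc.normc (x k 0)) ^+ 2).

Definition opnorm (M : 'M[R[i]]_4) : R :=
  sup [set vnorm (M *m x) | x in [set x : 'cV[R[i]]_4 | vnorm x <= 1]].

Definition schur (B X : 'M[R[i]]_4) : 'M[R[i]]_4 :=
  \matrix_(k, l) (B k l * X k l).

Definition schur_norm (B : 'M[R[i]]_4) : R :=
  sup [set opnorm (schur B X) | X in [set X : 'M[R[i]]_4 | opnorm X <= 1]].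

Definition ones4 : 'cV[R[i]]_4 := const_mx 1.
Definition Amat : 'M[R[i]]_4 := ones4 *m (map_mx Num.conj ones4)^T - 1%:M.

Definition cR (t : R) : R[i] := Complex t 0.
End Defs.

(* Main.v *)
Require Import Defs.
From HB Require Import structures.
From mathcomp Require Import all_boot all_order all_algebra.
From mathcomp Require Import all_classical all_reals.
From mathcomp.real_closed Require Import complex.
From mathcomp Require Import ring lra.
Import Order.TTheory GRing.Theory Num.Theory.
Local Open Scope ring_scope.

Section Aux.
Variable R : realType.

Definition nsq (z : R[i]) : R := complex.Re z ^+ 2 + complex.Im z ^+ 2.
Definition vsq (x : 'cV[R[i]]_4) : R := \sum_(k < 4) nsq (x k 0).

Lemma nsq_ge0 z : 0 <= nsq z.
Proof. by rewrite /nsq addr_ge0 ?sqr_ge0. Qed.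

Lemma vsq_ge0 x : 0 <= vsq x.
Proof. by rewrite /vsq sumr_ge0 // => k _; apply: nsq_ge0. Qed.

Lemma vnormE (x : 'cV[R[i]]_4) : vnorm x = Num.sqrt (vsq x).
Proof.
rewrite /vnorm /vsq; congr Num.sqrt; apply: eq_bigr => k _.
by case: (x k 0) => a b /=; rewrite sqr_sqrtr // addr_ge0 ?sqr_ge0.
Qed.

Lemma vnorm_ge0 (x : 'cV[R[i]]_4) : 0 <= vnorm x.
Proof. by rewrite vnormE sqrtr_ge0. Qed.

Lemma nsqD a b : nsq (a + b) = nsq a + nsq b + 2 * (complex.Re a * complex.Re b + complex.Im a * complex.Im b).
Proof. by case: a => a1 a2; case: b => b1 b2; rewrite /nsq; simpc => /=; ring. Qed.

Lemma nsqM a b : nsq (a * b) = nsq a * nsq b.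
Proof. by case: a => a1 a2; case: b => b1 b2; rewrite /nsq; simpc => /=; ring. Qed.

Lemma nsqcR (r : R) : nsq (cR r) = r ^+ 2.
Proof. by rewrite /nsq /cR /= expr0n /= addr0. Qed.

Lemma cs_step (S T P Q P' Q' : R) :
  0 <= P -> 0 <= Q -> 0 <= P' -> 0 <= Q' ->
  S ^+ 2 <= P * Q -> T ^+ 2 <= P' * Q' ->
  (S + T) ^+ 2 <= (P + P') * (Q + Q').
Proof.
move=> hP hQ hP' hQ' h1 h2.
have h3 : (2 * S * T) ^+ 2 <= (P * Q' + P' * Q) ^+ 2.
  have : (S * T) ^+ 2 <= (P * Q) * (P' * Q').
    rewrite exprMn; apply: ler_pM => //; exact: sqr_ge0.
  have : 0 <= (P * Q' - P' * Q) ^+ 2 by apply: sqr_ge0.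
  move=> h4 h5.
  have -> : (2 * S * T) ^+ 2 = 4 * (S * T) ^+ 2 by ring.
  have -> : (P * Q' + P' * Q) ^+ 2 = (P * Q' - P' * Q) ^+ 2 + 4 * ((P * Q) * (P' * Q')) by ring.
  lra.
have hV : 0 <= P * Q' + P' * Q by apply: addr_ge0; apply: mulr_ge0.
have h4 : 2 * S * T <= P * Q' + P' * Q.
  case: (lerP (2 * S * T) (P * Q' + P' * Q)) => // hlt.
  exfalso.
  have : (P * Q' + P' * Q) ^+ 2 < (2 * S * T) ^+ 2.
    rewrite !expr2; apply: (le_lt_trans (y := (P * Q' + P' * Q) * (2 * S * T))).
      by apply: ler_wpM2l => //; apply: ltW.
    by rewrite ltr_pM2r //; exact: le_lt_trans hV hlt.
  by rewrite ltNge h3.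
have -> : (S + T) ^+ 2 = S ^+ 2 + T ^+ 2 + 2 * S * T by ring.
have -> : (P + P') * (Q + Q') = P * Q + P' * Q' + (P * Q' + P' * Q) by ring.
lra.
Qed.

Lemma cs_sum n (a b c d : 'I_n -> R) :
  (\sum_(i < n) (a i * c i + b i * d i)) ^+ 2 <=
  (\sum_(i < n) (a i ^+ 2 + b i ^+ 2)) * (\sum_(i < n) (c i ^+ 2 + d i ^+ 2)).
Proof.
elim: n a b c d => [|n IH] a b c d; first by rewrite !big_ord0 expr0n /= mulr0.
rewrite !big_ord_recr /=; apply: cs_step.
- by apply: sumr_ge0 => i _; rewrite addr_ge0 ?sqr_ge0.
- by apply: sumr_ge0 => i _; rewrite addr_ge0 ?sqr_ge0.
- by rewrite addr_ge0 ?sqr_ge0.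
- by rewrite addr_ge0 ?sqr_ge0.
- exact: (IH (fun i => a (widen_ord _ i)) (fun i => b (widen_ord _ i))
           (fun i => c (widen_ord _ i)) (fun i => d (widen_ord _ i))).
- set x1 := a _; set x2 := b _; set y1 := c _; set y2 := d _.
  have -> : (x1 ^+ 2 + x2 ^+ 2) * (y1 ^+ 2 + y2 ^+ 2) =
    (x1 * y1 + x2 * y2) ^+ 2 + (x1 * y2 - x2 * y1) ^+ 2 by ring.
  by rewrite lerDl sqr_ge0.
Qed.

Lemma vnormD (x y : 'cV[R[i]]_4) : vnorm (x + y) <= vnorm x + vnorm y.
Proof.
rewrite !vnormE.
set S := \sum_(k < 4) (complex.Re (x k 0) * complex.Re (y k 0) + complex.Im (x k 0) * complex.Im (y k 0)).
have hv : vsq (x + y) = vsq x + vsq y + 2 * S.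
  rewrite /vsq /S mulr_sumr -!big_split /=; apply: eq_bigr => k _.
  by rewrite mxE nsqD.
have hS : S <= Num.sqrt (vsq x) * Num.sqrt (vsq y).
  rewrite -sqrtrM ?vsq_ge0 //.
  apply: (le_trans (ler_norm S)); rewrite -sqrtr_sqr ler_sqrt ?mulr_ge0 ?vsq_ge0 //.
  exact: cs_sum.
have h0 : 0 <= Num.sqrt (vsq x) + Num.sqrt (vsq y) by rewrite addr_ge0 ?sqrtr_ge0.
rewrite -(ger0_norm h0) -sqrtr_sqr ler_sqrt ?sqr_ge0 // hv.
have -> : (Num.sqrt (vsq x) + Num.sqrt (vsq y)) ^+ 2 =
  Num.sqrt (vsq x) ^+ 2 + Num.sqrt (vsq y) ^+ 2 + 2 * (Num.sqrt (vsq x) * Num.sqrt (vsq y)) by ring.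
rewrite !sqr_sqrtr ?vsq_ge0 //; lra.
Qed.

Lemma vnorm0 : vnorm (0 : 'cV[R[i]]_4) = 0.
Proof.
rewrite vnormE /vsq big1 ?sqrtr0 // => k _.
by rewrite mxE /nsq /= expr0n /= addr0.
Qed.

Lemma vnorm_sum n (f : 'I_n -> 'cV[R[i]]_4) :
  vnorm (\sum_(i < n) f i) <= \sum_(i < n) vnorm (f i).
Proof.
apply: (big_ind2 (fun v r => vnorm v <= r)); first by rewrite vnorm0.
move=> v1 r1 v2 r2 h1 h2; apply: le_trans (vnormD _ _) _; exact: lerD.
by [].
Qed.

Lemma vnormZ c (x : 'cV[R[i]]_4) : vnorm (c *: x) = Num.sqrt (nsq c) * vnorm x.
Proof.
rewrite !vnormE -sqrtrM ?nsq_ge0 //; congr Num.sqrt.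
rewrite /vsq mulr_sumr; apply: eq_bigr => k _; by rewrite mxE nsqM.
Qed.

Lemma vnormZcR (r : R) (x : 'cV[R[i]]_4) : vnorm (cR r *: x) = `|r| * vnorm x.
Proof. by rewrite vnormZ nsqcR sqrtr_sqr. Qed.


Lemma mulmx_cols (M : 'M[R[i]]_4) (x : 'cV[R[i]]_4) :
  M *m x = \sum_(j < 4) x j 0 *: col j M.
Proof.
apply/matrixP => i k; rewrite !mxE summxE; apply: eq_bigr => j _.
by rewrite !mxE (ord1 k) mulrC.
Qed.

Lemma nsq_le (x : 'cV[R[i]]_4) j : nsq (x j 0) <= vsq x.
Proof.
rewrite /vsq (bigD1 j) //= lerDl; apply: sumr_ge0 => k _; exact: nsq_ge0.
Qed.

Lemma opnorm_bounded (M : 'M[R[i]]_4) (x : 'cV[R[i]]_4) :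
  vnorm x <= 1 -> vnorm (M *m x) <= \sum_(j < 4) vnorm (col j M).
Proof.
move=> hx; rewrite mulmx_cols; apply: le_trans (vnorm_sum _ _) _.
apply: ler_sum => j _; rewrite vnormZ.
rewrite -[leRHS]mul1r; apply: ler_wpM2r; first exact: vnorm_ge0.
apply: le_trans hx; rewrite vnormE ler_sqrt ?vsq_ge0 //; exact: nsq_le.
Qed.

Lemma opnorm_ub (M : 'M[R[i]]_4) (x : 'cV[R[i]]_4) :
  vnorm x <= 1 -> vnorm (M *m x) <= opnorm M.
Proof.
move=> hx; rewrite /opnorm; apply: ub_le_sup; last by exists x.
exists (\sum_(j < 4) vnorm (col j M)) => y [z hz <-]; exact: opnorm_bounded.
Qed.

Lemma opnorm_le (M : 'M[R[i]]_4) (c : R) :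
  (forall x : 'cV[R[i]]_4, vnorm x <= 1 -> vnorm (M *m x) <= c) -> opnorm M <= c.
Proof.
move=> h; rewrite /opnorm; apply: ge_sup.
  by exists (vnorm (M *m 0)); exists 0 => //=; rewrite vnorm0 ler01.
by move=> y [z hz <-]; apply: h.
Qed.

Definition hs (k i : 'I_4) : R :=
  if odd ((k %% 2) * (i %% 2) + (k %/ 2) * (i %/ 2)) then -1 else 1.

Lemma hs_sq k i : hs k i ^+ 2 = 1.
Proof. by rewrite /hs; case: ifP => _; rewrite ?sqrrN expr1n. Qed.

Definition sgnv k (x : 'cV[R[i]]_4) : 'cV[R[i]]_4 := \col_i (cR (hs k i) * x i 0).

Lemma vnorm_sgnv k x : vnorm (sgnv k x) = vnorm x.
Proof.
rewrite !vnormE /vsq; congr Num.sqrt; apply: eq_bigr => i _.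
by rewrite mxE nsqM nsqcR hs_sq mul1r.
Qed.

Definition msg k (X : 'M[R[i]]_4) : 'M[R[i]]_4 :=
  \matrix_(i, j) (cR (hs k i) * cR (hs k j) * X i j).

Lemma msg_mul k X x : msg k X *m x = sgnv k (X *m sgnv k x).
Proof.
apply/matrixP => i l; rewrite !mxE mulr_sumr; apply: eq_bigr => j _.
by rewrite !mxE (ord1 l); ring.
Qed.

Lemma schur_dec (B : 'M[R[i]]_4) (c : 'I_4 -> R) X :
  (forall i j, B i j = \sum_(k < 4) cR (c k) * (cR (hs k i) * cR (hs k j))) ->
  schur B X = \sum_(k < 4) cR (c k) *: msg k X.
Proof.
move=> hB; apply/matrixP => i j; rewrite !mxE summxE hB mulr_suml.
by apply: eq_bigr => k _; rewrite !mxE; ring.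
Qed.

Lemma schur_up (B : 'M[R[i]]_4) (c : 'I_4 -> R) :
  (forall i j, B i j = \sum_(k < 4) cR (c k) * (cR (hs k i) * cR (hs k j))) ->
  forall X, opnorm X <= 1 -> opnorm (schur B X) <= \sum_(k < 4) `|c k|.
Proof.
move=> hB X hX; apply: opnorm_le => x hx.
rewrite (schur_dec _ _ X hB) mulmx_suml; apply: le_trans (vnorm_sum _ _) _.
apply: ler_sum => k _; rewrite -scalemxAl vnormZcR msg_mul vnorm_sgnv.
rewrite -[leRHS]mulr1; apply: ler_wpM2l; first exact: normr_ge0.
apply: le_trans hX; apply: opnorm_ub; by rewrite vnorm_sgnv.
Qed.

Lemma opnorm0 : opnorm (0 : 'M[R[i]]_4) <= 1.
Proof. by apply: opnorm_le => x _; rewrite mul0mx vnorm0 ler01. Qed.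

Lemma schur_norm_le (B : 'M[R[i]]_4) (c : R) :
  (forall X, opnorm X <= 1 -> opnorm (schur B X) <= c) -> schur_norm B <= c.
Proof.
move=> h; rewrite /schur_norm; apply: ge_sup.
  by exists (opnorm (schur B 0)); exists 0 => //=; exact: opnorm0.
by move=> y [z hz <-]; apply: h.
Qed.

Lemma schur_norm_ge (B : 'M[R[i]]_4) (c : R) X :
  (forall X, opnorm X <= 1 -> opnorm (schur B X) <= c) ->
  opnorm X <= 1 -> opnorm (schur B X) <= schur_norm B.
Proof.
move=> h hX; rewrite /schur_norm; apply: ub_le_sup; last by exists X.
by exists c => y [z hz <-]; apply: h.
Qed.


Definition rm (f : 'I_4 -> 'I_4 -> R) : 'M[R[i]]_4 := \matrix_(i, j) cR (f i j).
Definition rv (g : 'I_4 -> R) : 'cV[R[i]]_4 := \col_i cR (g i).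

Lemma cR0 : cR (0 : R) = 0. Proof. by []. Qed.
Lemma cRD (a b : R) : cR (a + b) = cR a + cR b.
Proof. by rewrite /cR; simpc. Qed.
Lemma cRM (a b : R) : cR (a * b) = cR a * cR b.
Proof. by rewrite /cR; simpc. Qed.
Lemma cR_sum (g : 'I_4 -> R) : cR (\sum_(i < 4) g i) = \sum_(i < 4) cR (g i).
Proof. exact: (big_morph _ cRD cR0). Qed.

Lemma schur_rm f g : schur (rm f) (rm g) = rm (fun i j => f i j * g i j).
Proof. by apply/matrixP => i j; rewrite !mxE cRM. Qed.

Lemma rm_rv f g : rm f *m rv g = rv (fun i => \sum_(j < 4) f i j * g j).
Proof.
apply/matrixP => i k; rewrite !mxE cR_sum; apply: eq_bigr => j _.
by rewrite !mxE cRM.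
Qed.

Lemma vnorm_rv g : vnorm (rv g) = Num.sqrt (\sum_(i < 4) g i ^+ 2).
Proof.
rewrite vnormE /vsq; congr Num.sqrt; apply: eq_bigr => i _.
by rewrite mxE nsqcR.
Qed.

Lemma ReD (a b : R[i]) : complex.Re (a + b) = complex.Re a + complex.Re b.
Proof. by case: a => ? ?; case: b => ? ?; simpc. Qed.
Lemma ImD (a b : R[i]) : complex.Im (a + b) = complex.Im a + complex.Im b.
Proof. by case: a => ? ?; case: b => ? ?; simpc. Qed.
Lemma Re_sum (F : 'I_4 -> R[i]) : complex.Re (\sum_(j < 4) F j) = \sum_(j < 4) complex.Re (F j).
Proof. exact: (big_morph _ ReD (erefl _)). Qed.
Lemma Im_sum (F : 'I_4 -> R[i]) : complex.Im (\sum_(j < 4) F j) = \sum_(j < 4) complex.Im (F j).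
Proof. exact: (big_morph _ ImD (erefl _)). Qed.
Lemma Re_cRM r (z : R[i]) : complex.Re (cR r * z) = r * complex.Re z.
Proof. by case: z => ? ?; rewrite /cR; simpc. Qed.
Lemma Im_cRM r (z : R[i]) : complex.Im (cR r * z) = r * complex.Im z.
Proof. by case: z => ? ?; rewrite /cR; simpc. Qed.

Lemma vsq_rm f (x : 'cV[R[i]]_4) : vsq (rm f *m x) =
  \sum_(i < 4) ((\sum_(j < 4) f i j * complex.Re (x j 0)) ^+ 2
              + (\sum_(j < 4) f i j * complex.Im (x j 0)) ^+ 2).
Proof.
rewrite /vsq; apply: eq_bigr => i _; rewrite /nsq mxE Re_sum Im_sum.
by congr (_ ^+ 2 + _ ^+ 2); apply: eq_bigr => j _; rewrite mxE ?Re_cRM ?Im_cRM.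
Qed.

Lemma opnorm_iso f :
  (forall a : 'I_4 -> R, \sum_(i < 4) (\sum_(j < 4) f i j * a j) ^+ 2 = \sum_(i < 4) a i ^+ 2) ->
  opnorm (rm f) <= 1.
Proof.
move=> h; apply: opnorm_le => x hx; rewrite vnormE vsq_rm big_split /=.
rewrite (h (fun j => complex.Re (x j 0))) (h (fun j => complex.Im (x j 0))).
by rewrite -big_split /= -vnormE.
Qed.


Definition fB (t : R) (i j : 'I_4) : R := if (i == j :> nat) then t else 1.
Definition fI (i j : 'I_4) : R := if (i == j :> nat) then 1 else 0.
Definition fH (i j : 'I_4) : R := if (i == j :> nat) then - (1 / 2) else 1 / 2.
Definition cB (t : R) (k : 'I_4) : R := if (k == 0 :> nat) then (t + 3) / 4 else (t - 1) / 4.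
Definition cI (k : 'I_4) : R := 1 / 4.

Lemma dec_B t (i j : 'I_4) : fB t i j = \sum_(k < 4) cB t k * (hs k i * hs k j).
Proof.
case: i => [[|[|[|[|i]]]] hi] //; case: j => [[|[|[|[|j]]]] hj] //;
rewrite !big_ord_recr big_ord0 /= /fB /cB /hs /=; by field.
Qed.

Lemma dec_I (i j : 'I_4) : fI i j = \sum_(k < 4) cI k * (hs k i * hs k j).
Proof.
case: i => [[|[|[|[|i]]]] hi] //; case: j => [[|[|[|[|j]]]] hj] //;
rewrite !big_ord_recr big_ord0 /= /fI /cI /hs /=; by field.
Qed.

Lemma iso_I : opnorm (rm fI) <= 1.
Proof.
apply: opnorm_iso => a; rewrite !big_ord_recr !big_ord0 /= /fI /=; ring.
Qed.

Lemma iso_H : opnorm (rm fH) <= 1.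
Proof.
apply: opnorm_iso => a; rewrite !big_ord_recr !big_ord0 /= /fH /=; by field.
Qed.


Lemma B_rm t : Amat R + (cR t)%:M = rm (fB t).
Proof.
apply/matrixP => i j; rewrite !mxE big_ord1 !mxE rmorph1 mul1r /fB.
case: eqVneq => [->|hij].
  by rewrite eqxx /= subrr add0r mulr1n.
have hn : (i == j :> nat) = false by exact: negbTE hij.
by rewrite hn /= subr0 mulr0n addr0.
Qed.

Lemma I_rm : (1%:M : 'M[R[i]]_4) = rm fI.
Proof.
apply/matrixP => i j; rewrite !mxE /fI.
case: eqVneq => [->|hij]; first by rewrite eqxx /=.
have hn : (i == j :> nat) = false by exact: negbTE hij.
by rewrite hn.
Qed.

Lemma hypB t : forall i j : 'I_4,
  rm (fB t) i j = \sum_(k < 4) cR (cB t k) * (cR (hs k i) * cR (hs k j)).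
Proof.
move=> i j; rewrite mxE dec_B cR_sum; apply: eq_bigr => k _; by rewrite !cRM.
Qed.

Lemma hypI : forall i j : 'I_4,
  rm fI i j = \sum_(k < 4) cR (cI k) * (cR (hs k i) * cR (hs k j)).
Proof.
move=> i j; rewrite mxE dec_I cR_sum; apply: eq_bigr => k _; by rewrite !cRM.
Qed.

Lemma lowerb f c g v :
  (forall i j : 'I_4, rm f i j = \sum_(k < 4) cR (c k) * (cR (hs k i) * cR (hs k j))) ->
  opnorm (rm g) <= 1 -> \sum_(i < 4) v i ^+ 2 <= 1 ->
  Num.sqrt (\sum_(i < 4) (\sum_(j < 4) f i j * g i j * v j) ^+ 2) <= schur_norm (rm f).
Proof.
move=> hf hg hv.
apply: le_trans (schur_norm_ge _ _ _ (schur_up _ _ hf) hg).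
rewrite schur_rm; apply: le_trans (opnorm_ub _ (rv v) _); last first.
  by rewrite vnorm_rv -sqrtr1 ler_sqrt.
rewrite rm_rv vnorm_rv ler_sqrt; last by apply: sumr_ge0 => i _; apply: sqr_ge0.
by [].
Qed.

Lemma upper_B t : schur_norm (rm (fB t)) <= `|(t + 3) / 4| + 3 * `|(t - 1) / 4|.
Proof.
apply: schur_norm_le => X hX; apply: le_trans (schur_up _ _ (hypB t) X hX) _.
rewrite !big_ord_recr big_ord0 /= /cB /=. lra.
Qed.



Definition e0 (i : 'I_4) : R := if (i == 0 :> nat) then 1 else 0.
Definition vh (i : 'I_4) : R := 1 / 2.

Lemma lower_t t : `|t| <= schur_norm (rm (fB t)).
Proof.
have := lowerb _ _ _ e0 (hypB t) iso_I.
have -> : \sum_(i < 4) (\sum_(j < 4) fB t i j * fI i j * e0 j) ^+ 2 = t ^+ 2.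
  by rewrite !big_ord_recr !big_ord0 /= /fB /fI /e0 /=; ring.
rewrite sqrtr_sqr; apply.
by rewrite !big_ord_recr !big_ord0 /= /e0 /=; lra.
Qed.

Lemma lower_H t : `|(3 - t) / 2| <= schur_norm (rm (fB t)).
Proof.
have := lowerb _ _ _ vh (hypB t) iso_H.
have -> : \sum_(i < 4) (\sum_(j < 4) fB t i j * fH i j * vh j) ^+ 2 = ((3 - t) / 2) ^+ 2.
  by rewrite !big_ord_recr !big_ord0 /= /fB /fH /vh /=; field.
rewrite sqrtr_sqr; apply.
by rewrite !big_ord_recr !big_ord0 /= /vh /=; lra.
Qed.

Lemma main_t t : schur_norm (Amat R + (cR t)%:M) =
  (if (1 <= t) || (t <= -3) then `|t| else `|3 - t| / 2).
Proof.
rewrite B_rm.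
have U := upper_B t; have L1 := lower_t t; have L2 := lower_H t.
set S := schur_norm _ in U L1 L2 *.
case: ifP => h.
  case/orP: h => h.
    have a1 : 0 <= (t + 3) / 4 by lra.
    have a2 : 0 <= (t - 1) / 4 by lra.
    have a3 : 0 <= t by lra.
    rewrite (ger0_norm a1) (ger0_norm a2) in U.
    rewrite (ger0_norm a3) in L1 *.
    apply/eqP; rewrite eq_le; apply/andP; split; lra.
  have a1 : (t + 3) / 4 <= 0 by lra.
  have a2 : (t - 1) / 4 <= 0 by lra.
  have a3 : t <= 0 by lra.
  rewrite (ler0_norm a1) (ler0_norm a2) in U.
  rewrite (ler0_norm a3) in L1 *.
  apply/eqP; rewrite eq_le; apply/andP; split; lra.
move/negbT: h; rewrite negb_or -!ltNge => /andP [h1 h2].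
have a1 : 0 <= (t + 3) / 4 by lra.
have a2 : (t - 1) / 4 <= 0 by lra.
have a3 : 0 <= (3 - t) / 2 by lra.
have a4 : 0 <= 3 - t by lra.
rewrite (ger0_norm a1) (ler0_norm a2) in U.
rewrite (ger0_norm a3) in L2.
rewrite (ger0_norm a4).
apply/eqP; rewrite eq_le; apply/andP; split; lra.
Qed.

Lemma main_I : schur_norm (1%:M : 'M[R[i]]_4) = 1.
Proof.
rewrite I_rm; apply/eqP; rewrite eq_le; apply/andP; split.
  apply: schur_norm_le => X hX; apply: le_trans (schur_up _ _ hypI X hX) _.
  by rewrite !big_ord_recr big_ord0 /= /cI ger0_norm; lra.
have := lowerb _ _ _ e0 hypI iso_I.
have -> : \sum_(i < 4) (\sum_(j < 4) fI i j * fI i j * e0 j) ^+ 2 = 1.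
  by rewrite !big_ord_recr !big_ord0 /= /fI /e0 /=; ring.
rewrite sqrtr1; apply.
by rewrite !big_ord_recr !big_ord0 /= /e0 /=; lra.
Qed.

Lemma cRN1 : cR (-1 : R) = -1.
Proof. by rewrite /cR; simpc. Qed.

Lemma main_A : schur_norm (Amat R) = 3 / 2.
Proof.
have -> : Amat R = Amat R + (cR 0)%:M.
  by apply/matrixP => i j; rewrite !mxE cR0 mul0rn addr0.
rewrite main_t /= ifF; last by apply/negbTE; rewrite negb_or -!ltNge; apply/andP; split; lra.
by rewrite subr0 ger0_norm //; lra.
Qed.

Lemma main_AI : schur_norm (Amat R - 1%:M) = 2.
Proof.
have -> : Amat R - 1%:M = Amat R + (cR (-1))%:M.
  by apply/matrixP => i j; rewrite !mxE cRN1 mulNrn.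
rewrite main_t /= ifF; last by apply/negbTE; rewrite negb_or -!ltNge; apply/andP; split; lra.
by rewrite opprK ger0_norm; lra.
Qed.

End Aux.

Theorem mainTheorem15 (R : realType) :
  (forall t : R,
     schur_norm (Amat R + (cR t)%:M) =
       (if (1 <= t) || (t <= -3) then `|t| else `|3 - t| / 2)) /\
  schur_norm (Amat R) = 3 / 2 /\
  schur_norm (1%:M : 'M[R[i]]_4) = 1 /\
  schur_norm (Amat R - 1%:M) = 2 /\
  2 > Num.sqrt ((schur_norm (Amat R)) ^+ 2 + (schur_norm (1%:M : 'M[R[i]]_4)) ^+ 2).
Proof.
split; first exact: main_t.
split; first exact: main_A.
split; first exact: main_I.
split; first exact: main_AI.
rewrite main_A main_I.
have h2 : (2 : R) = Num.sqrt (2 ^+ 2) by rewrite sqrtr_sqr ger0_norm.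
rewrite [X in _ < X]h2 ltr_sqrt; last by lra.
lra.
Qed.
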